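(* Assume Martin's Axiom. Then there exists a very mad family, and every very mad family has cardinality $2^{\aleph_0}$.
   Context: Functions $f \in \mathbb{N}^{\mathbb{N}}$ are identified with their graphs. Two functions $g_0,g_1 \in \mathbb{N}^{\mathbb{N}}$ are almost disjoint if $\{n : g_0(n)=g_1(n)\}$ is finite; $\mathcal{A}\subseteq\mathbb{N}^{\mathbb{N}}$ is an almost disjoint family of functions if any two distinct members are almost disjoint. A function $f$ is finitely covered by $\mathcal{A}$ if there are $g_0,\dots,g_n \in \mathcal{A}$ with $\{k : f(k)\notin\{g_0(k),\dots,g_n(k)\}\}$ finite; a family $F$ is finitely covered by $\mathcal{A}$ if some member of $F$ is. A family $\mathcal{A} \subseteq \mathbb{N}^{\mathbb{N}}$ is a very mad family if it is an almost disjoint family of functions and for every $F \subseteq \mathbb{N}^{\mathbb{N}}$ with $|F| < |\mathcal{A}|$ that is not finitely covered by $\mathcal{A}$, there is $g \in \mathcal{A}$ such that $\{n : f(n)=g(n)\}$ is infinite for every $f \in F$. *)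

(* Defs.v *)
From Stdlib Require Import Arith List.
Import ListNotations.

Definition injective {A B : Type} (f : A -> B) : Prop :=
  forall x y, f x = f y -> x = y.

Definition card_le (A B : Type) : Prop := exists f : A -> B, injective f.
Definition card_lt (A B : Type) : Prop := card_le A B /\ ~ card_le B A.
Definition card_eq (A B : Type) : Prop :=
  exists f : A -> B, injective f /\ (forall y, exists x, f x = y).

Definition countable (A : Type) : Prop := card_le A nat.

Definition compatible {P : Type} (le : P -> P -> Prop) (p q : P) : Prop :=
  exists r, le r p /\ le r q.

Definition antichain {P : Type} (le : P -> P -> Prop) (X : P -> Prop) : Prop :=
  forall p q, X p -> X q -> p <> q -> ~ compatible le p q.

Definition ccc {P : Type} (le : P -> P -> Prop) : Prop :=
  forall X : P -> Prop, antichain le X -> countable {p : P | X p}.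

Definition dense {P : Type} (le : P -> P -> Prop) (D : P -> Prop) : Prop :=
  forall p, exists d, D d /\ le d p.

Definition is_filter {P : Type} (le : P -> P -> Prop) (G : P -> Prop) : Prop :=
  (exists p, G p) /\
  (forall p q, G p -> le p q -> G q) /\
  (forall p q, G p -> G q -> exists r, G r /\ le r p /\ le r q).

Definition partial_order {P : Type} (le : P -> P -> Prop) : Prop :=
  (forall p, le p p) /\
  (forall p q r, le p q -> le q r -> le p r) /\
  (forall p q, le p q -> le q p -> p = q).

Definition MartinsAxiom : Prop :=
  forall (P : Type) (le : P -> P -> Prop),
    partial_order le -> inhabited P -> ccc le ->
    forall (I : Type) (D : I -> P -> Prop),
      card_lt I (nat -> bool) ->
      (forall i, dense le (D i)) ->
      exists G : P -> Prop, is_filter le G /\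
        (forall i, exists p, G p /\ D i p).

Definition almost_disjoint (g0 g1 : nat -> nat) : Prop :=
  exists N, forall n, N <= n -> g0 n <> g1 n.

Definition ad_family (A : (nat -> nat) -> Prop) : Prop :=
  forall g0 g1, A g0 -> A g1 -> g0 <> g1 -> almost_disjoint g0 g1.

Definition fin_covered_fun (A : (nat -> nat) -> Prop) (f : nat -> nat) : Prop :=
  exists l : list (nat -> nat),
    (forall g, In g l -> A g) /\
    exists N, forall k, N <= k -> exists g, In g l /\ f k = g k.

Definition fin_covered (F A : (nat -> nat) -> Prop) : Prop :=
  exists f, F f /\ fin_covered_fun A f.

Definition inf_agree (f g : nat -> nat) : Prop :=
  forall N, exists n, N <= n /\ f n = g n.

(* Very mad family (mad families are by convention infinite) *)
Definition very_mad (A : (nat -> nat) -> Prop) : Prop :=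
  ad_family A /\
  card_le nat {g : nat -> nat | A g} /\
  forall F : (nat -> nat) -> Prop,
    card_lt {f : nat -> nat | F f} {g : nat -> nat | A g} ->
    ~ fin_covered F A ->
    exists g, A g /\ forall f, F f -> inf_agree f g.

(* Main.v *)
Require Import Defs.
From Stdlib Require Import Arith List Lia Cantor.
From Stdlib Require Import Inverse_Image.
From Stdlib Require Import Classical ClassicalEpsilon FunctionalExtensionality PropExtensionality.
Import ListNotations.

Definition R := nat -> bool.

Lemma my_choice {A B : Type} (P : A -> B -> Prop) :
  (forall a, exists b, P a b) -> exists f : A -> B, forall a, P a (f a).
Proof.
  intro H. exists (fun a => proj1_sig (constructive_indefinite_description _ (H a))).
  intro a. exact (proj2_sig (constructive_indefinite_description _ (H a))).
Qed.

Lemma sig_eq {A : Type} (P : A -> Prop) (x y : {a | P a}) :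
  proj1_sig x = proj1_sig y -> x = y.
Proof.
  destruct x as [x px], y as [y py]; simpl; intro E; subst.
  f_equal; apply Classical_Prop.proof_irrelevance.
Qed.

Lemma pred_ext {A : Type} (P Q : A -> Prop) : (forall a, P a <-> Q a) -> P = Q.
Proof. intro H; extensionality a; apply propositional_extensionality; auto. Qed.

Lemma card_le_refl A : card_le A A.
Proof. exists (fun x => x); intros x y; auto. Qed.

Lemma card_le_trans A B C : card_le A B -> card_le B C -> card_le A C.
Proof.
  intros [f hf] [g hg]; exists (fun x => g (f x)); intros x y e; auto.
Qed.

Lemma card_le_lt A B C : card_le A B -> card_lt B C -> card_lt A C.
Proof.
  intros h [h1 h2]; split. eapply card_le_trans; eauto.
  intro h3; apply h2; eapply card_le_trans; eauto.
Qed.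

Lemma card_le_sig {A} (P : A -> Prop) : card_le {a | P a} A.
Proof. exists (@proj1_sig _ _); intros x y; apply sig_eq. Qed.

Lemma card_le_sub {A} (P Q : A -> Prop) : (forall a, P a -> Q a) -> card_le {a | P a} {a | Q a}.
Proof.
  intro H. exists (fun x => exist _ (proj1_sig x) (H _ (proj2_sig x))).
  intros x y e; apply sig_eq; apply (f_equal (@proj1_sig _ _)) in e; exact e.
Qed.

Definition pairR (a b : R) : R := fun k => if Nat.even k then a (Nat.div2 k) else b (Nat.div2 k).

Lemma pairR_l a b n : pairR a b (2 * n) = a n.
Proof. unfold pairR. rewrite Nat.even_even, Nat.div2_double. auto. Qed.
Lemma pairR_r a b n : pairR a b (S (2 * n)) = b n.
Proof. unfold pairR. rewrite Nat.even_succ, Nat.div2_succ_double. replace (Nat.odd (2*n)) with false; auto. rewrite <- Nat.negb_even, Nat.even_even; auto. Qed.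

Lemma pairR_inj a b a' b' : pairR a b = pairR a' b' -> a = a' /\ b = b'.
Proof.
  intro e; split; extensionality n.
  - rewrite <- (pairR_l a b), <- (pairR_l a' b'), e; auto.
  - rewrite <- (pairR_r a b), <- (pairR_r a' b'), e; auto.
Qed.

Definition seqR (F : nat -> R) : R := fun k => let (i, j) := Cantor.of_nat k in F i j.
Lemma seqR_inj F G : seqR F = seqR G -> F = G.
Proof.
  intro e; extensionality i; extensionality j.
  assert (H := f_equal (fun h => h (Cantor.to_nat (i, j))) e). cbv beta in H.
  unfold seqR in H. rewrite Cantor.cancel_of_to in H. exact H.
Qed.

Definition funR (f : nat -> nat) : R := fun k => let (i, j) := Cantor.of_nat k in Nat.eqb (f i) j.
Lemma funR_inj f g : funR f = funR g -> f = g.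
Proof.
  intro e; extensionality i.
  assert (H := f_equal (fun h => h (Cantor.to_nat (i, f i))) e). cbv beta in H.
  unfold funR in H. rewrite Cantor.cancel_of_to in H. rewrite Nat.eqb_refl in H.
  symmetry in H; apply Nat.eqb_eq in H; auto.
Qed.

Lemma card_le_fun_R : card_le (nat -> nat) R.
Proof. exists funR; intros x y; apply funR_inj. Qed.

Lemma card_le_R_fun : card_le R (nat -> nat).
Proof.
  exists (fun (r : R) (n : nat) => if r n then 1 else 0). intros x y e; extensionality n.
  apply (f_equal (fun h => h n)) in e; destruct (x n), (y n); auto; discriminate.
Qed.

Fixpoint code (l : list nat) : nat :=
  match l with [] => 0 | x :: l => S (Cantor.to_nat (x, code l)) end.
Lemma code_inj l l' : code l = code l' -> l = l'.
Proof.
  revert l'; induction l as [|x l IH]; intros [|y l'] e; cbn [code] in e; try discriminate; auto.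
  apply Nat.succ_inj in e. apply (f_equal Cantor.of_nat) in e. rewrite !Cantor.cancel_of_to in e.
  injection e as e1 e2. subst; f_equal; auto.
Qed.

Lemma R_two : ((fun _ => true) : R) <> ((fun _ => false) : R).
Proof. intro e; apply (f_equal (fun h => h 0)) in e; discriminate. Qed.

Lemma small_sum Y Z : card_lt Y R -> card_lt Z R -> card_lt (Y + Z) R.
Proof.
  intros [[fy hy] ny] [[fz hz] nz]. split.
  - exists (fun v => match v with inl y => pairR (fun _ => true) (fy y) | inr z => pairR (fun _ => false) (fz z) end).
    intros [y|y] [z|z] e; apply pairR_inj in e; destruct e as [e1 e2];
      try (exfalso; apply R_two; congruence); f_equal; auto.
  - intros [phi hphi].
    destruct (classic (exists a, forall b, exists y, phi (pairR a b) = inl y)) as [[a Ha]|Hn].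
    + apply ny. destruct (my_choice _ Ha) as [g Hg]. exists g.
      intros b b' e. assert (phi (pairR a b) = phi (pairR a b')) by (rewrite Hg, Hg, e; auto).
      apply hphi, pairR_inj in H; tauto.
    + apply nz.
      assert (H : forall a, exists bz, phi (pairR a (fst bz)) = inr (snd bz)).
      { intro a. apply NNPP; intro C. apply Hn. exists a. intro b.
        destruct (phi (pairR a b)) as [y|z] eqn:E. eauto.
        exfalso; apply C. exists (b, z); auto. }
      destruct (my_choice _ H) as [g Hg]. exists (fun a => snd (g a)).
      intros a a' e. assert (phi (pairR a (fst (g a))) = phi (pairR a' (fst (g a')))) by
        (rewrite Hg, Hg, e; auto).
      apply hphi, pairR_inj in H0; tauto.
Qed.

Lemma small_unit : card_lt unit R.
Proof.
  split. exists (fun _ => fun _ => true); intros [] []; auto.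
  intros [f hf]. apply R_two, hf. destruct (f (fun _ => true)), (f (fun _ => false)); auto.
Qed.

Lemma small_option Y : card_lt Y R -> card_lt (option Y) R.
Proof.
  intro H. eapply card_le_lt; [|apply (small_sum _ _ H small_unit)].
  exists (fun o => match o with Some y => inl y | None => inr tt end).
  intros [a|] [b|] e; try discriminate; auto. injection e; intros; subst; auto.
Qed.

Lemma small_nat_times Y : card_lt Y R -> card_lt (Y * nat) R.
Proof.
  intros [[fy hy] ny]. split.
  - exists (fun p => pairR (fy (fst p)) (fun k => Nat.eqb k (snd p))).
    intros [a m] [b n] e; apply pairR_inj in e; destruct e as [e1 e2]; simpl in *.
    apply hy in e1; subst. apply (f_equal (fun h => h m)) in e2. rewrite Nat.eqb_refl in e2.
    symmetry in e2; apply Nat.eqb_eq in e2; subst; auto.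
  - intros [phi hphi]. apply ny.
    set (Th := fun x => phi (seqR x)).
    assert (Hk : exists k, forall r, exists x, x k = r /\ snd (Th x) = k).
    { apply NNPP; intro C.
      assert (H : forall k, exists c, forall x, x k = c -> snd (Th x) <> k).
      { intro k. apply NNPP; intro C2. apply C. exists k. intro r.
        apply NNPP; intro C3. apply C2. exists r. intros x e1 e2. apply C3; eauto. }
      destruct (my_choice _ H) as [c Hc]. apply (Hc (snd (Th c)) c); auto. }
    destruct Hk as [k Hk]. destruct (my_choice _ Hk) as [g Hg].
    exists (fun r => fst (Th (g r))). intros r r' e.
    assert (Th (g r) = Th (g r')).
    { destruct (Hg r) as [_ h1], (Hg r') as [_ h2].
      destruct (Th (g r)), (Th (g r')); simpl in *; subst; auto. }
    apply hphi, seqR_inj in H. destruct (Hg r) as [h1 _], (Hg r') as [h2 _].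
    rewrite <- h1, <- h2, H; auto.
Qed.

Lemma small_empty {A} : card_lt {a : A | False} R.
Proof.
  split. exists (fun x => False_rect R (proj2_sig x)). intros [x []].
  intros [f _]. destruct (f (fun _ => true)) as [x []].
Qed.

Section SB.
Variables (A B : Type) (f : A -> B) (g : B -> A).
Hypotheses (hf : injective f) (hg : injective g).

Definition gf (x : A) : A := g (f x).
Definition CC (a : A) : Prop := exists n a0, (forall b, g b <> a0) /\ a = Nat.iter n gf a0.

Lemma notC_range a : ~ CC a -> exists b, g b = a.
Proof.
  intro H. apply NNPP; intro C. apply H. exists 0, a. split; auto.
  intros b e; apply C; eauto.
Qed.

Definition hSB (a : A) : B :=
  match excluded_middle_informative (CC a) with
  | left _ => f a
  | right nc => proj1_sig (constructive_indefinite_description _ (notC_range a nc))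
  end.

Lemma hSB_spec a : (CC a /\ hSB a = f a) \/ (~ CC a /\ g (hSB a) = a).
Proof.
  unfold hSB. destruct (excluded_middle_informative (CC a)) as [c|c]; auto.
  right; split; auto. exact (proj2_sig (constructive_indefinite_description _ (notC_range a c))).
Qed.

Lemma hSB_bij : injective hSB /\ forall y, exists x, hSB x = y.
Proof.
  split.
  - intros a1 a2 e.
    destruct (hSB_spec a1) as [[c1 e1]|[c1 e1]], (hSB_spec a2) as [[c2 e2]|[c2 e2]].
    + apply hf; congruence.
    + exfalso; apply c2. destruct c1 as [n [a0 [h0 ea]]]. exists (S n), a0; split; auto.
      change (a2 = g (f (Nat.iter n gf a0))). rewrite <- ea, <- e1, e; auto.
    + exfalso; apply c1. destruct c2 as [n [a0 [h0 ea]]]. exists (S n), a0; split; auto.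
      change (a1 = g (f (Nat.iter n gf a0))). rewrite <- ea, <- e2, <- e; auto.
    + rewrite <- e1, <- e2, e; auto.
  - intro b. destruct (classic (CC (g b))) as [c|c].
    + destruct c as [[|m] [a0 [h0 ea]]].
      * exfalso; apply (h0 b); auto.
      * change (g b = g (f (Nat.iter m gf a0))) in ea. apply hg in ea.
        exists (Nat.iter m gf a0). destruct (hSB_spec (Nat.iter m gf a0)) as [[_ e]|[c _]].
        -- congruence.
        -- exfalso; apply c; exists m, a0; auto.
    + exists (g b). destruct (hSB_spec (g b)) as [[c2 _]|[_ e]]. tauto. apply hg; auto.
Qed.
End SB.

Lemma SB A B : card_le A B -> card_le B A -> card_eq A B.
Proof.
  intros [f hf] [g hg]. exists (hSB A B f g hf hg). apply hSB_bij; auto.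
Qed.

Fixpoint sumg (l : list (nat -> nat)) (i : nat) : nat :=
  match l with [] => 0 | g :: l => g i + sumg l i end.

Lemma sumg_ge l g i : In g l -> g i <= sumg l i.
Proof. induction l as [|h l IH]; simpl; [tauto|]. intros [e|H]; subst; try lia. specialize (IH H); lia. Qed.

Definition padl (s : list nat) (l : list (nat -> nat)) (len : nat) : list nat :=
  s ++ map (fun i => S (sumg l i)) (seq (length s) (len - length s)).

Lemma padl_len s l len : length (padl s l len) = length s + (len - length s).
Proof. unfold padl. rewrite length_app, length_map, length_seq. auto. Qed.

Lemma padl_nth s l len n : length s <= n < length (padl s l len) ->
  nth n (padl s l len) 0 = S (sumg l n).
Proof.
  rewrite padl_len. intros [h1 h2]. unfold padl. rewrite app_nth2 by lia.
  rewrite nth_indep with (d' := S (sumg l 0)) by (rewrite length_map, length_seq; lia).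
  change (S (sumg l 0)) with ((fun i => S (sumg l i)) 0).
  rewrite map_nth, seq_nth by lia. f_equal. f_equal. lia.
Qed.

Lemma nth_prefix (s t : list nat) n : n < length s -> nth n (s ++ t) 0 = nth n s 0.
Proof. intro; apply app_nth1; auto. Qed.

Section Key.
Variables (Ap Fp : (nat -> nat) -> Prop).
Hypotheses (sA : card_lt {a | Ap a} R) (sF : card_lt {f | Fp f} R)
  (nc : forall f, Fp f -> ~ fin_covered_fun Ap f).

Definition validE (E : (nat -> nat) -> Prop) :=
  exists l, (forall g, E g <-> In g l) /\ (forall g, In g l -> Ap g).

Record cond := mkc { cs : list nat; cE : (nat -> nat) -> Prop; cV : validE cE }.

Lemma cond_eq p q : cs p = cs q -> cE p = cE q -> p = q.
Proof.
  destruct p, q; simpl; intros; subst; f_equal; apply Classical_Prop.proof_irrelevance.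
Qed.

Definition cle (p q : cond) : Prop :=
  (exists t, cs p = cs q ++ t) /\ (forall h, cE q h -> cE p h) /\
  (forall n h, length (cs q) <= n < length (cs p) -> cE q h -> nth n (cs p) 0 <> h n).

Lemma cle_po : partial_order cle.
Proof.
  split; [|split].
  - intro p; split; [exists []; rewrite app_nil_r; auto|split; auto]. intros; lia.
  - intros p q r [[t1 e1] [i1 d1]] [[t2 e2] [i2 d2]]. split; [|split].
    + exists (t2 ++ t1); rewrite e1, e2, app_assoc; auto.
    + auto.
    + intros n h hn hh. destruct (Nat.lt_ge_cases n (length (cs q))) as [c|c].
      * rewrite e1, nth_prefix by auto. apply d2; auto. lia.
      * apply d1; auto. lia.
  - intros p q [[t1 e1] [i1 _]] [[t2 e2] [i2 _]]. apply cond_eq.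
    + assert (length t1 = 0).
      { apply (f_equal (@length nat)) in e1; apply (f_equal (@length nat)) in e2.
        rewrite length_app in e1, e2. lia. }
      destruct t1; [|discriminate]. rewrite e1, app_nil_r; auto.
    + apply pred_ext; split; auto.
Qed.

Definition c0 : cond.
Proof. refine (mkc [] (fun _ => False) _). exists []; split; simpl; tauto. Defined.

Lemma cle_ccc : ccc cle.
Proof.
  intros X HX. exists (fun p => code (cs (proj1_sig p))).
  intros [p xp] [q xq] e; simpl in e. apply code_inj in e. apply sig_eq; simpl.
  apply NNPP; intro ne. apply (HX p q xp xq ne).
  destruct (cV p) as [lp [hp1 hp2]], (cV q) as [lq [hq1 hq2]].
  assert (V : validE (fun h => cE p h \/ cE q h)).
  { exists (lp ++ lq); split.
    - intro g; rewrite in_app_iff, hp1, hq1; tauto.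
    - intros g; rewrite in_app_iff; intros [h|h]; auto. }
  exists (mkc (cs p) _ V). split; split; simpl.
  - exists []; rewrite app_nil_r; auto.
  - split; auto. intros; lia.
  - exists []; rewrite app_nil_r, e; auto.
  - split; auto. intros; rewrite e in *; lia.
Qed.

Definition Ind := (option ({a | Ap a} + {f | Fp f}) * nat)%type.

Definition Dn (i : Ind) (p : cond) : Prop :=
  match i with
  | (None, k) => k <= length (cs p)
  | (Some (inl a), _) => cE p (proj1_sig a)
  | (Some (inr f), k) => exists n, k <= n < length (cs p) /\ nth n (cs p) 0 = proj1_sig f n
  end.

Lemma Dn_dense i : dense cle (Dn i).
Proof.
  intro p. destruct (cV p) as [l [hl1 hl2]] eqn:Ev.
  destruct i as [[[[a ha]|[f hf]]|] k]; simpl.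
  - assert (V : validE (fun h => cE p h \/ a = h)).
    { exists (a :: l); split.
      - intro g; simpl; rewrite hl1; tauto.
      - intros g [e|h]; subst; auto. }
    exists (mkc (cs p) _ V); simpl; split; auto. split; [|split]; simpl.
    + exists []; rewrite app_nil_r; auto.
    + auto.
    + intros; lia.
  - assert (Hm : exists m, k + length (cs p) <= m /\ forall g, In g l -> f m <> g m).
    { apply NNPP; intro C. apply (nc f hf). exists l; split; [intros; apply hl2; auto|].
      exists (k + length (cs p)). intros m hm. apply NNPP; intro C2. apply C.
      exists m; split; auto. intros g hg e; apply C2; exists g; auto. }
    destruct Hm as [m [hm1 hm2]].
    exists (mkc (padl (cs p) l m ++ [f m]) (cE p) (cV p)); simpl.
    assert (Lp : length (padl (cs p) l m) = m) by (rewrite padl_len; lia).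
    split.
    + exists m. rewrite length_app, Lp; simpl. split; [lia|].
      rewrite app_nth2 by lia. rewrite Lp, Nat.sub_diag. auto.
    + split; [|split]; simpl.
      * exists (map (fun i => S (sumg l i)) (seq (length (cs p)) (m - length (cs p))) ++ [f m]).
        unfold padl; rewrite app_assoc; auto.
      * auto.
      * intros n h hn hh. apply hl1 in hh. rewrite length_app, Lp in hn; simpl in hn.
        destruct (Nat.lt_ge_cases n m) as [c|c].
        -- rewrite app_nth1 by lia. rewrite padl_nth by lia.
           assert (h n <= sumg l n) by (apply sumg_ge; auto). lia.
        -- assert (n = m) by lia; subst. rewrite app_nth2 by lia. rewrite Lp, Nat.sub_diag.
           simpl. apply hm2; auto.
  - exists (mkc (padl (cs p) l k) (cE p) (cV p)); simpl. split.
    + rewrite padl_len; lia.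
    + split; [|split]; simpl.
      * unfold padl; eexists; eauto.
      * auto.
      * intros n h hn hh. apply hl1 in hh. rewrite padl_nth by lia.
        assert (h n <= sumg l n) by (apply sumg_ge; auto). lia.
Qed.

Lemma key_lemma (MA : MartinsAxiom) :
  exists g, (forall a, Ap a -> almost_disjoint g a) /\ (forall f, Fp f -> inf_agree f g).
Proof.
  assert (sI : card_lt Ind (nat -> bool)).
  { apply small_nat_times, small_option, small_sum; auto. }
  destruct (MA cond cle cle_po (inhabits c0) cle_ccc Ind Dn sI Dn_dense) as [G [[_ [Gup Gdir]] GD]].
  assert (Gc : forall p q n, G p -> G q -> n < length (cs p) -> n < length (cs q) ->
                 nth n (cs p) 0 = nth n (cs q) 0).
  { intros p q n gp gq h1 h2. destruct (Gdir p q gp gq) as [r [_ [[[t1 e1] _] [[t2 e2] _]]]].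
    rewrite <- (nth_prefix (cs p) t1), <- (nth_prefix (cs q) t2), <- e1, <- e2 by auto. auto. }
  assert (Hn : forall n, exists p, G p /\ n < length (cs p)).
  { intro n. destruct (GD (None, S n)) as [p [gp dp]]. exists p; simpl in dp; split; auto. }
  destruct (my_choice _ Hn) as [P HP].
  exists (fun n => nth n (cs (P n)) 0). split.
  - intros a ha. destruct (GD (Some (inl (exist _ a ha)), 0)) as [p [gp dp]]; simpl in dp.
    exists (length (cs p)). intros n hn.
    destruct (HP n) as [gq hq].
    destruct (Gdir p (P n) gp gq) as [r [gr [[[t1 e1] [_ d1]] [[t2 e2] _]]]].
    assert (Lr : n < length (cs r)) by (rewrite e2, length_app; lia).
    rewrite (Gc (P n) r n gq gr hq Lr). apply d1; auto.
  - intros f hf N. destruct (GD (Some (inr (exist _ f hf)), N)) as [p [gp [n [hn e]]]].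
    simpl in e. exists n; split; [lia|]. rewrite <- e.
    destruct (HP n) as [gq hq]. apply (Gc p (P n) n gp gq); lia.
Qed.
End Key.

Section Tower.
Variables (X : Type) (x0 : X).

Definition epsX (P : X -> Prop) : X := epsilon (inhabits x0) P.
Definition succS (S : X -> Prop) : X -> Prop := fun x => S x \/ x = epsX (fun y => ~ S y).
Definition sub (S U : X -> Prop) := forall x, S x -> U x.

Inductive T : (X -> Prop) -> Prop :=
| T_succ S : T S -> T (succS S)
| T_union (Fm : (X -> Prop) -> Prop) : (forall S, Fm S -> T S) -> T (fun x => exists S, Fm S /\ S x).

Definition comparable (S : X -> Prop) := forall U, T U -> sub U S \/ sub S U.

Lemma eps_notin S y : ~ S y -> ~ S (epsX (fun z => ~ S z)).
Proof. intro h. apply (epsilon_spec (inhabits x0) (fun z => ~ S z)). eauto. Qed.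

Lemma lemma1 S : comparable S -> forall U, T U -> sub U S \/ sub (succS S) U.
Proof.
  intros cS U TU. induction TU as [U TU IH|Fm HF IH].
  - destruct IH as [IH|IH].
    + destruct (classic (sub S U)) as [c|c].
      * right. assert (S = U) by (apply pred_ext; split; auto). subst. intros x hx; auto.
      * destruct (cS _ (T_succ _ TU)) as [d|d]; [left; auto|].
        left. assert (Hx : exists x, S x /\ ~ U x).
        { apply NNPP; intro C; apply c. intros x hx; apply NNPP; intro C2. apply C; exists x. auto. }
        destruct Hx as [x [h1 h2]]. destruct (d x h1) as [h3|h3]; [tauto|].
        intros y [hy|hy]; auto. subst; congruence.
    + right. intros x hx. left; auto.
  - destruct (classic (forall S0, Fm S0 -> sub S0 S)) as [c|c].
    + left. intros x [S0 [h1 h2]]. eapply c; eauto.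
    + right. apply not_all_ex_not in c. destruct c as [S0 c].
      apply imply_to_and in c. destruct c as [h1 h2].
      destruct (IH S0 h1) as [d|d]; [tauto|]. intros x hx; exists S0; auto.
Qed.

Lemma all_comp S : T S -> comparable S.
Proof.
  intro TS. induction TS as [S TS IH|Fm HF IH]; intros U TU.
  - destruct (lemma1 S IH U TU) as [d|d].
    + left; intros x hx; left; auto.
    + right; auto.
  - destruct (classic (forall S0, Fm S0 -> sub S0 U)) as [c|c].
    + right. intros x [S0 [h1 h2]]. eapply c; eauto.
    + apply not_all_ex_not in c. destruct c as [S0 c].
      apply imply_to_and in c. destruct c as [h1 h2].
      destruct (IH S0 h1 U TU) as [d|d]; [|tauto]. left; intros x hx; exists S0; auto.
Qed.

Lemma chain S U : T S -> T U -> sub S U \/ sub U S.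
Proof. intros h1 h2. destruct (all_comp U h2 S h1); auto. Qed.

Definition wlt (x y : X) : Prop := exists S, T S /\ S x /\ ~ S y.

Lemma wlt_trans x y z : wlt x y -> wlt y z -> wlt x z.
Proof.
  intros [S1 [t1 [a1 b1]]] [S2 [t2 [a2 b2]]].
  destruct (chain S1 S2 t1 t2) as [d|d].
  - exists S2; auto.
  - exfalso; auto.
Qed.

Definition Mx (x : X) : X -> Prop := fun z => exists S, (T S /\ ~ S x) /\ S z.

Lemma Mx_T x : T (Mx x).
Proof. apply T_union. intros S [h _]; auto. Qed.

Lemma Mx_e x : x = epsX (fun y => ~ Mx x y).
Proof.
  assert (nx : ~ Mx x x) by (intros [S [[_ h] h2]]; auto).
  destruct (classic (succS (Mx x) x)) as [[c|c]|c]; [tauto|auto|].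
  exfalso. assert (Hs : sub (succS (Mx x)) (Mx x)).
  { intros z hz. exists (succS (Mx x)). split; auto. split; auto. apply T_succ, Mx_T. }
  apply (eps_notin (Mx x) x nx). apply Hs. right; auto.
Qed.

Lemma wlt_total x y : x <> y -> wlt x y \/ wlt y x.
Proof.
  intro ne. destruct (classic (succS (Mx x) y)) as [c|c].
  - right. destruct c as [c|c].
    + exists (Mx x). split; [apply Mx_T|]. split; auto. intros [S [[_ h] h2]]; auto.
    + exfalso. apply ne. rewrite c. apply Mx_e.
  - left. exists (succS (Mx x)). split; [apply T_succ, Mx_T|]. split; auto.
    right; apply Mx_e.
Qed.

Lemma wlt_min (P : X -> Prop) y0 : P y0 -> exists m, P m /\ forall w, wlt w m -> ~ P w.
Proof.
  intro py.
  set (M := fun z => exists S, (T S /\ forall w, S w -> ~ P w) /\ S z).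
  assert (TM : T M) by (apply T_union; intros S [h _]; auto).
  assert (MP : forall w, M w -> ~ P w) by (intros w [S [[_ h] h2]]; auto).
  assert (ny : ~ M y0) by (intro h; apply (MP y0); auto).
  assert (Hex : exists w, succS M w /\ P w).
  { apply NNPP; intro C. assert (Hs : sub (succS M) M).
    { intros z hz. exists (succS M). split; auto. split; [apply T_succ; auto|].
      intros w hw pw; apply C; eauto. }
    apply (eps_notin M y0 ny). apply Hs. right; auto. }
  destruct Hex as [w [[hw|hw] pw]]. exfalso; apply (MP w); auto.
  exists w. split; auto. intros v [S [TS [h1 h2]]].
  destruct (lemma1 M (all_comp M TM) S TS) as [d|d].
  - apply MP; auto.
  - exfalso; apply h2. apply d. right; auto.
Qed.

Lemma wlt_wf : well_founded wlt.
Proof.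
  intro a. apply NNPP; intro na.
  destruct (wlt_min (fun z => ~ Acc wlt z) a na) as [m [hm1 hm2]].
  apply hm1. constructor. intros y hy. apply NNPP; intro C. apply (hm2 y hy C).
Qed.
End Tower.

Theorem well_ordering (X : Type) (x0 : X) : exists lt : X -> X -> Prop,
  well_founded lt /\ (forall x y z, lt x y -> lt y z -> lt x z) /\
  (forall x y, x <> y -> lt x y \/ lt y x).
Proof.
  exists (wlt X x0). split; [apply wlt_wf|split; [apply wlt_trans|apply wlt_total]].
Qed.


Definition X := (nat -> nat).
Definition small (P : X -> Prop) := card_lt {x : X | P x} R.

Lemma small_sub (P Q : X -> Prop) : (forall a, P a -> Q a) -> small Q -> small P.
Proof. intros h s. eapply card_le_lt; [apply card_le_sub; eauto|exact s]. Qed.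

Lemma wf_min {A} (r : A -> A -> Prop) (P : A -> Prop) y0 : well_founded r -> P y0 ->
  exists m, P m /\ forall w, r w m -> ~ P w.
Proof.
  intros wf py. apply NNPP; intro C.
  assert (forall a, ~ P a).
  { intro a. induction (wf a) as [a _ IH]. intro pa. apply C. exists a; split; auto. }
  eauto.
Qed.

Lemma wf_irrefl {A} (r : A -> A -> Prop) x : well_founded r -> ~ r x x.
Proof. intro wf. induction (wf x) as [x _ IH]. intro h. apply (IH x h h). Qed.

Lemma good_order : exists lt : X -> X -> Prop,
  well_founded lt /\ (forall x y z, lt x y -> lt y z -> lt x z) /\
  (forall x y, x <> y -> lt x y \/ lt y x) /\ (forall x, small (fun y => lt y x)).
Proof.
  destruct (well_ordering X (fun _ => 0)) as [lt0 [wf0 [tr0 to0]]].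
  set (B := fun x => small (fun y => lt0 y x)).
  assert (cRB : card_le R {x | B x}).
  { destruct (classic (forall x, B x)) as [c|c].
    - eapply card_le_trans; [apply card_le_R_fun|].
      exists (fun x => exist B x (c x)). intros x y e. apply (f_equal (@proj1_sig _ _)) in e; auto.
    - apply not_all_ex_not in c. destruct c as [x0 c].
      destruct (wf_min lt0 (fun x => ~ B x) x0 wf0 c) as [m [hm1 hm2]].
      assert (hB : forall y, lt0 y m -> B y) by (intros y hy; apply NNPP; apply hm2; auto).
      assert (nB : ~ card_lt {x | B x} R).
      { intro s. apply hm1. unfold B. eapply small_sub; [exact hB|exact s]. }
      apply NNPP; intro C. apply nB. split; auto.
      eapply card_le_trans; [apply card_le_sig|apply card_le_fun_R]. }
  assert (E : card_eq X {x | B x}).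
  { apply SB. eapply card_le_trans; [apply card_le_fun_R|exact cRB]. apply card_le_sig. }
  destruct E as [beta [binj bsur]].
  exists (fun x y => lt0 (proj1_sig (beta x)) (proj1_sig (beta y))). split; [|split; [|split]].
  - apply (wf_inverse_image X X lt0 (fun x => proj1_sig (beta x))). auto.
  - intros x y z; apply tr0.
  - intros x y ne. apply to0. intro e. apply ne, binj, sig_eq; auto.
  - intro x. eapply card_le_lt; [|exact (proj2_sig (beta x))].
    exists (fun y : {y | lt0 (proj1_sig (beta y)) (proj1_sig (beta x))} =>
              exist (fun z => lt0 z (proj1_sig (beta x))) (proj1_sig (beta (proj1_sig y))) (proj2_sig y)).
    intros y y' e. apply (f_equal (@proj1_sig _ _)) in e; simpl in e.
    apply sig_eq, binj, sig_eq; auto.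
Qed.

Lemma ad_sym g h : almost_disjoint g h -> almost_disjoint h g.
Proof. intros [N HN]; exists N; intros n hn e; apply (HN n hn); auto. Qed.

Lemma nc_empty h : ~ fin_covered_fun (fun _ => False) h.
Proof.
  intros [l [hl [N HN]]]. destruct (HN N (le_n _)) as [g [hg _]]. apply (hl g hg).
Qed.

Section Construction.
Hypothesis MA : MartinsAxiom.
Variable lt : X -> X -> Prop.
Hypotheses (wf : well_founded lt) (tr : forall x y z, lt x y -> lt y z -> lt x z)
  (to : forall x y, x <> y -> lt x y \/ lt y x) (seg : forall x, small (fun y => lt y x)).

Lemma bounded (F : X -> Prop) : small F -> exists x, forall f, F f -> lt f x.
Proof.
  intro sF. apply NNPP; intro C.
  set (K := fun f y => lt y f \/ y = f).
  assert (sK : forall f, small (K f)).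
  { intro f. eapply card_le_lt; [|apply (small_option _ (seg f))].
    assert (Kp : forall y, K f y -> y <> f -> lt y f) by (intros y [h|h] ne; tauto).
    exists (fun y : {y | K f y} => match excluded_middle_informative (proj1_sig y = f) with
               | left _ => None
               | right ne => Some (exist (fun z => lt z f) (proj1_sig y) (Kp _ (proj2_sig y) ne)) end).
    intros y y' e.
    destruct (excluded_middle_informative (proj1_sig y = f)) as [a|a],
             (excluded_middle_informative (proj1_sig y' = f)) as [b|b]; try discriminate.
    - apply sig_eq; congruence.
    - injection e; intro e'. apply sig_eq; auto. }
  assert (Hr : forall f, exists r, forall y, K f y -> almost_disjoint r y).
  { intro f. destruct (key_lemma (K f) (fun _ => False) (sK f) small_empty (fun _ h => False_ind _ h) MA)
      as [r [h1 _]]. eauto. }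
  destruct (my_choice _ Hr) as [r Hr'].
  set (RF := fun h => exists f, F f /\ h = r f).
  assert (sRF : small RF).
  { eapply card_le_lt; [|exact sF].
    assert (H : forall h : {h | RF h}, exists f : {f | F f}, proj1_sig h = r (proj1_sig f)).
    { intros [h [f [hf e]]]. exists (exist _ f hf); auto. }
    destruct (my_choice _ H) as [c Hc]. exists c. intros a b e.
    apply sig_eq. rewrite Hc, Hc, e; auto. }
  destruct (key_lemma (fun _ => False) RF small_empty sRF (fun h _ => nc_empty h) MA) as [z [_ hz]].
  apply C. exists z. intros f hf. apply NNPP; intro nl.
  assert (Kz : K f z).
  { destruct (classic (z = f)) as [e|ne]; [right; auto|].
    destruct (to z f ne) as [a|a]; [left; auto|tauto]. }
  destruct (Hr' f z Kz) as [N HN]. destruct (hz (r f) (ex_intro _ f (conj hf eq_refl)) N) as [n [hn e]].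
  apply (HN n hn e).
Qed.

Definition Phi (A F : X -> Prop) : X :=
  epsilon (inhabits (fun _ : nat => 0))
    (fun g => (forall a, A a -> almost_disjoint g a) /\ (forall f, F f -> inf_agree f g)).

Definition body (x : X) (rec : forall y, lt y x -> X) : X :=
  Phi (fun h => exists y (H : lt y x), h = rec y H)
      (fun f => lt f x /\ ~ fin_covered_fun (fun h => exists y (H : lt y x), h = rec y H) f).

Definition G : X -> X := Fix wf (fun _ => X) body.

Definition Aset x := fun h => exists y (H : lt y x), h = G y.
Definition Fset x := fun f => lt f x /\ ~ fin_covered_fun (Aset x) f.

Lemma G_eq x : G x = Phi (Aset x) (Fset x).
Proof.
  unfold G. rewrite Fix_eq. reflexivity.
  intros x' f g H. assert (f = g).
  { extensionality y. extensionality p. auto. }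
  subst; auto.
Qed.

Lemma G_spec x : (forall a, Aset x a -> almost_disjoint (G x) a) /\
                 (forall f, Fset x f -> inf_agree f (G x)).
Proof.
  rewrite G_eq. unfold Phi. apply epsilon_spec.
  apply key_lemma; auto.
  - eapply card_le_lt; [|exact (seg x)].
    assert (H : forall h : {h | Aset x h}, exists y : {y | lt y x}, proj1_sig h = G (proj1_sig y)).
    { intros [h [y [hy e]]]. exists (exist _ y hy); auto. }
    destruct (my_choice _ H) as [c Hc]. exists c. intros a b e.
    apply sig_eq. rewrite Hc, Hc, e; auto.
  - apply (small_sub _ _ (fun f h => proj1 h)). apply seg.
  - intros f [_ h]; auto.
Qed.

Lemma G_ad x y : lt y x -> almost_disjoint (G x) (G y).
Proof. intro h. apply (proj1 (G_spec x)). exists y, h; auto. Qed.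

Lemma ad_neq g h : almost_disjoint g h -> g <> h.
Proof. intros [N HN] e; subst. apply (HN N (le_n _)); auto. Qed.

Lemma G_inj x y : G x = G y -> x = y.
Proof.
  intro e. apply NNPP; intro ne. destruct (to x y ne) as [a|a].
  - apply (ad_neq _ _ (G_ad y x a)); auto.
  - apply (ad_neq _ _ (G_ad x y a)); auto.
Qed.

Definition Astar := fun h => exists x, h = G x.

Lemma Astar_vm : very_mad Astar.
Proof.
  split; [|split].
  - intros g0 g1 [x ex] [y ey] ne. subst. assert (x <> y) by (intro; subst; auto).
    destruct (to x y H) as [a|a]. apply ad_sym, G_ad; auto. apply G_ad; auto.
  - exists (fun n => exist Astar (G (fun _ => n)) (ex_intro _ _ eq_refl)).
    intros n m e. apply (f_equal (@proj1_sig _ _)) in e; simpl in e. apply G_inj in e.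
    apply (f_equal (fun h => h 0)) in e; auto.
  - intros F [cl ncl] nfc.
    assert (sF : small F).
    { split. eapply card_le_trans; [exact cl|]. eapply card_le_trans; [apply card_le_sig|apply card_le_fun_R].
      intro h. apply ncl. eapply card_le_trans; [|exact h].
      eapply card_le_trans; [apply card_le_sig|apply card_le_fun_R]. }
    destruct (bounded F sF) as [x hx]. exists (G x). split; [exists x; auto|].
    intros f hf. apply (proj2 (G_spec x)). split; auto.
    intros [l [hl cov]]. apply nfc. exists f; split; auto. exists l; split; auto.
    intros g hg. destruct (hl g hg) as [y [hy e]]. exists y; auto.
Qed.
End Construction.

Lemma part2 (MA : MartinsAxiom) A : very_mad A -> card_eq {g | A g} (nat -> bool).
Proof.
  intros [adA [[e he] vm]].
  assert (le1 : card_le {g | A g} R) by (eapply card_le_trans; [apply card_le_sig|apply card_le_fun_R]).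
  apply SB; auto.
  apply NNPP; intro nle.
  destruct (key_lemma A (fun _ => False) (conj le1 nle) small_empty (fun _ h => False_ind _ h) MA)
    as [f [hf _]].
  destruct (vm (fun h => h = f)) as [g [hg hg2]].
  - split.
    + exists (fun _ => e 0). intros a b _. apply sig_eq. rewrite (proj2_sig a), (proj2_sig b); auto.
    + intros [phi hphi]. assert (e 0 = e 1).
      { apply hphi, sig_eq. rewrite (proj2_sig (phi (e 0))), (proj2_sig (phi (e 1))); auto. }
      apply he in H. discriminate.
  - intros [f0 [ef [l [hl [N HN]]]]]. subst f0.
    assert (U : exists M, forall n, M <= n -> forall g, In g l -> f n <> g n).
    { clear HN. induction l as [|g0 l IH].
      - exists 0; intros n _ g [].
      - destruct IH as [M HM]. intros; apply hl; right; auto.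
        destruct (hf g0 (hl g0 (or_introl eq_refl))) as [M0 HM0].
        exists (M + M0). intros n hn g [eg|ig]; [subst; apply HM0; lia|apply HM; auto; lia]. }
    destruct U as [M HM]. destruct (HN (N + M)) as [g [ig eg]]; [lia|].
    apply (HM (N + M) ltac:(lia) g ig eg).
  - destruct (hf g hg) as [N HN]. destruct (hg2 f eq_refl N) as [n [hn e']].
    apply (HN n hn); auto.
Qed.

Theorem mainTheorem2 :
  MartinsAxiom ->
  (exists A : (nat -> nat) -> Prop, very_mad A) /\
  (forall A : (nat -> nat) -> Prop, very_mad A ->
     card_eq {g : nat -> nat | A g} (nat -> bool)).
Proof.
  intro MA. split.
  - destruct good_order as [lt [wf [tr [to seg]]]].
    exists (Astar lt wf). apply (Astar_vm MA lt wf to seg).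
  - apply part2; auto.
Qed.
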